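(* Let $K$ be a field, let $L\in K^{n\times n}[s]$, $L_1\in K^{n_1\times n_1}[s]$ be nonsingular polynomial matrices, and let $\Theta,\Theta_1\in K^{n_1\times n}_\infty(s)$ satisfy $\Theta L=L_1\Theta_1$. Let $\phi:U^L\to U^{L_1}$ be defined by $\phi\bar x=\rho_e^{L_1}(\Theta\bar x)$, $\bar x\in U^L$. Then the dual map $\phi^*:U^{L_1^T}\to U^{L^T}$ of $\phi$ with respect to the pairings $\langle\cdot,\cdot\rangle_L$ and $\langle\cdot,\cdot\rangle_{L_1}$ is given by $$\phi^*\,\rho^{L_1^T}w=\rho^{L^T}(\Theta_1^Tw)\qquad\text{for all } w\in K^{n_1}_\infty(s).$$
   Context: $K(s)$ denotes the field of rational functions over $K$. A rational function $f$ is proper if $f=0$ or $f=p/q$ with $p,q\in K[s]$, $q\ne0$, $\deg p\le\deg q$; $K_\infty(s)$ is the ring of proper rational functions, and $K^n_\infty(s)$, $K^{m\times r}_\infty(s)$ denote vectors/matrices with proper rational entries. One has $K(s)=K[s]\oplus s^{-1}K_\infty(s)$; $\pi_+:K(s)\to K[s]$ denotes the projection onto the polynomial part along $s^{-1}K_\infty(s)$, extended entrywise to vectors and matrices, and $(f)_0=(\pi_+f)(0)$ (also entrywise). For a nonsingular $M\in K^{m\times m}[s]$, define $\rho^M:K^m_\infty(s)\to K^m[s]$ by $\rho^M x=M\,\pi_+(M^{-1}x)$, write $\bar x=\rho^Mx$, and let $U^M=\operatorname{Im}\rho^M$, a $K_\infty(s)$-module (and $K$-vector space) via $q\cdot\rho^Mx=\rho^M(qx)$.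 The extension $\rho_e^{L_1}$ is $\rho_e^{L_1}w=L_1\pi_+(L_1^{-1}w)$ for $w\in K^{n_1}(s)$. The bilinear form $\langle \rho^{M^T}y,\rho^Mx\rangle_M=(y^TM^{-1}x)_0$, $x,y\in K^m_\infty(s)$, is a well-defined nondegenerate $K$-bilinear pairing $U^{M^T}\times U^M\to K$. The dual map $\phi^*$ of a $K$-linear $\phi:U^L\to U^{L_1}$ is the $K$-linear map $U^{L_1^T}\to U^{L^T}$ with $\langle\phi^*\eta,\xi\rangle_L=\langle\eta,\phi\xi\rangle_{L_1}$ for all $\eta\in U^{L_1^T}$, $\xi\in U^L$. *)

(* Defs.v *)
From HB Require Import structures.
From mathcomp Require Import all_boot all_order all_algebra.
From mathcomp Require Import generic_quotient fraction.
From Stdlib Require Import ClassicalEpsilon.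
Set Implicit Arguments. Unset Strict Implicit. Unset Printing Implicit Defensive.
Import GRing.Theory.
Local Open Scope ring_scope.

Section Defs.
Variable K : fieldType.

Definition RF := {fraction {poly K}}.

Definition toF (p : {poly K}) : RF := @FracField.tofrac {poly K} p.

Definition numF (f : RF) : {poly K} := (val (repr f)).1.
Definition denF (f : RF) : {poly K} := (val (repr f)).2.

(* pi_+ : polynomial part of p/q is the quotient p %/ q *)
Definition pip (f : RF) : {poly K} := numF f %/ denF f.

Definition const0 (f : RF) : K := (pip f).[0].

(* f proper: f = 0 or deg p <= deg q (size = deg + 1; size 0 = 0) *)
Definition is_proper (f : RF) : bool := (size (numF f) <= size (denF f))%N.

Definition proper_vec m (x : 'cV[RF]_m) : Prop := forall i, is_proper (x i 0).
Definition proper_mx m r (A : 'M[RF]_(m, r)) : Prop :=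
  forall i j, is_proper (A i j).

Definition polyF m r (M : 'M[{poly K}]_(m, r)) : 'M[RF]_(m, r) := map_mx toF M.

(* rho_e^M w = M pi_+(M^{-1} w), for any w in K^m(s); rho^M is its
   restriction to proper vectors *)
Definition rho_e m (M : 'M[{poly K}]_m) (w : 'cV[RF]_m) : 'cV[{poly K}]_m :=
  M *m map_mx pip (invmx (polyF M) *m w).
Definition rho m (M : 'M[{poly K}]_m) (x : 'cV[RF]_m) : 'cV[{poly K}]_m :=
  rho_e M x.

Definition inU m (M : 'M[{poly K}]_m) (a : 'cV[{poly K}]_m) : Prop :=
  exists x, proper_vec x /\ rho M x = a.

(* <rho^{M^T} y, rho^M x>_M = (y^T M^{-1} x)_0, computed via chosen
   representatives (well-defined by the context) *)
Definition pairing m (M : 'M[{poly K}]_m) (a b : 'cV[{poly K}]_m) : K :=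
  let yx := epsilon (inhabits (0 : 'cV[RF]_m, 0 : 'cV[RF]_m))
     (fun yx : 'cV[RF]_m * 'cV[RF]_m =>
        [/\ proper_vec yx.1, proper_vec yx.2,
            rho M^T yx.1 = a & rho M yx.2 = b]) in
  const0 ((yx.1^T *m invmx (polyF M) *m yx.2) 0 0).

Definition is_dual n n1 (L : 'M[{poly K}]_n) (L1 : 'M[{poly K}]_n1)
  (phi : 'cV[{poly K}]_n -> 'cV[{poly K}]_n1)
  (psi : 'cV[{poly K}]_n1 -> 'cV[{poly K}]_n) : Prop :=
  forall eta, inU L1^T eta ->
    inU L^T (psi eta) /\
    forall xi, inU L xi -> pairing L (psi eta) xi = pairing L1 eta (phi xi).

Definition phi_map n n1 (L1 : 'M[{poly K}]_n1) (Theta : 'M[RF]_(n1, n))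
  (xbar : 'cV[{poly K}]_n) : 'cV[{poly K}]_n1 :=
  rho_e L1 (Theta *m polyF xbar).

End Defs.

(* Main.v *)
Require Import Defs.
From HB Require Import structures.
From mathcomp Require Import all_boot all_order all_algebra.
From mathcomp Require Import generic_quotient fraction zify.
Import GRing.Theory.
Local Open Scope ring_scope.
Section S.
Local Open Scope quotient_scope.
Variable K : fieldType.
Local Notation F := (@toF K).
Lemma denF_neq0 (f : RF K) : denF f != 0.
Proof. exact: denom_ratioP. Qed.
Lemma frac_mul_den (f : RF K) : F (numF f) = f * F (denF f).
Proof.
rewrite /toF /numF /denF.
set r := repr f.
have -> : f = \pi_(RF K) r by rewrite /r reprK.
have dn := denom_ratioP r.
unlock FracField.tofrac.
transitivity (\pi_(RF K) (FracField.mulf r (Ratio (val r).2 1))); last first.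
  exact: FracField.pi_mul.
apply/eqmodP; rewrite /= FracField.equivfE /FracField.mulf.
rewrite !numden_Ratio ?oner_neq0 ?mulf_neq0 ?oner_neq0 //.
by rewrite !mulr1 mul1r mulrC.
Qed.
Lemma F_neq0 p : p != 0 -> F p != 0.
Proof. by rewrite /toF tofrac_eq0. Qed.
Arguments F_neq0 {p}.
Lemma F_inj : injective F.
Proof. by move=> p q /eqP; rewrite /toF tofrac_eq => /eqP. Qed.
Lemma frac_numden (f : RF K) : f = F (numF f) / F (denF f).
Proof. by rewrite frac_mul_den mulfK // F_neq0 // denF_neq0. Qed.
Lemma cross a b (f : RF K) : b != 0 -> f = F a / F b ->
  numF f * b = a * denF f.
Proof.
move=> b0 fE; apply: F_inj.
rewrite /toF !tofracM -/(F _) -/(F _) -/(F _) -/(F _) frac_mul_den fE.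
by rewrite mulrAC mulfVK // F_neq0.
Qed.
Lemma pipE a b : b != 0 -> pip (F a / F b) = a %/ b.
Proof.
move=> b0; have := @cross a b _ b0 (erefl _); rewrite /pip => e.
have d0 := denF_neq0 (F a / F b).
set n := numF _ in e *; set d := denF _ in e d0 *.
rewrite -(divp_pmul2r n b0 d0) e mulrC divp_pmul2l //.
Qed.
Lemma nat1 x y z w : (x <= y -> z <= w -> (x+z).-1 <= (y+w).-1)%N.
Proof. rewrite -!subn1; lia. Qed.
Lemma nat2 x y z w : (0 < y -> 0 < w -> x <= y -> z < w -> (x+z).-1 < (y+w).-1)%N.
Proof. rewrite -!subn1; lia. Qed.
Lemma nat3 n b a d : (0 < n -> 0 < b -> 0 < a -> 0 < d -> (n+b).-1 = (a+d).-1 ->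
  (n <= d) = (a <= b))%N.
Proof. rewrite -!subn1 => *; apply/idP/idP; lia. Qed.
Lemma size_mul_le (a b c d : {poly K}) : b != 0 -> d != 0 ->
  (size a <= size b)%N -> (size c <= size d)%N -> (size (a * c)%R <= size (b * d)%R)%N.
Proof.
move=> b0 d0 h1 h2; apply: leq_trans (size_mul_leq _ _) _.
rewrite size_mul //.
have hb : (0 < size b)%N by rewrite size_poly_gt0.
have hd : (0 < size d)%N by rewrite size_poly_gt0.
exact: nat1.
Qed.
Lemma size_mul_lt (a b c d : {poly K}) : b != 0 -> d != 0 ->
  (size a <= size b)%N -> (size c < size d)%N -> (size (a * c)%R < size (b * d)%R)%N.
Proof.
move=> b0 d0 h1 h2; apply: leq_ltn_trans (size_mul_leq _ _) _.
rewrite size_mul //.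
have hb : (0 < size b)%N by rewrite size_poly_gt0.
have hd : (0 < size d)%N by rewrite size_poly_gt0.
exact: nat2.
Qed.
Lemma properE a b : b != 0 -> is_proper (F a / F b) = (size a <= size b)%N.
Proof.
move=> b0.
have [->|a0] := eqVneq a 0.
  have := @cross 0 b _ b0 (erefl _); rewrite /is_proper.
  rewrite !mul0r => /eqP; rewrite mulf_eq0 (negbTE b0) orbF => /eqP ->.
  by rewrite size_poly0.
have := @cross a b _ b0 (erefl _); rewrite /is_proper => e.
have d0 := denF_neq0 (F a / F b).
set n := numF _ in e *; set d := denF _ in e d0 *.
have n0 : n != 0.
  apply/eqP=> n0; move: e; rewrite n0 mul0r => /esym/eqP.
  by rewrite mulf_eq0 (negbTE a0) (negbTE d0).
have := congr1 (fun p : {poly K} => size p) e; rewrite /= !size_mul //.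
have hb : (0 < size b)%N by rewrite size_poly_gt0.
have hd : (0 < size d)%N by rewrite size_poly_gt0.
have ha : (0 < size a)%N by rewrite size_poly_gt0.
have hn : (0 < size n)%N by rewrite size_poly_gt0.
move=> hs.
exact: nat3.
Qed.
Lemma toFD p q : F (p + q) = F p + F q. Proof. exact: tofracD. Qed.
Lemma toFM p q : F (p * q) = F p * F q. Proof. exact: tofracM. Qed.
Lemma sumF (f g : RF K) : f + g =
  F (numF f * denF g + numF g * denF f) / F (denF f * denF g).
Proof.
have df : F (denF f) != 0 by apply: F_neq0; apply: denF_neq0.
have dg : F (denF g) != 0 by apply: F_neq0; apply: denF_neq0.
have ef := frac_numden f.
have eg := frac_numden g.
transitivity (F (numF f) / F (denF f) + F (numF g) / F (denF g)).
  exact: (congr2 (fun a b => a + b) ef eg).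
move: df dg; move: (numF f) (denF f) (numF g) (denF g) => a b c d df dg.
rewrite toFD !toFM. by rewrite (addf_div (F a) (F c) df dg).
Qed.
Lemma prodF (f g : RF K) : f * g =
  F (numF f * numF g) / F (denF f * denF g).
Proof.
have ef := frac_numden f.
have eg := frac_numden g.
transitivity ((F (numF f) / F (denF f)) * (F (numF g) / F (denF g))).
  exact: (congr2 (fun a b => a * b) ef eg).
move: (numF f) (denF f) (numF g) (denF g) => a b c d.
by rewrite !toFM (mulf_div (F a) (F b) (F c) (F d)).
Qed.
Lemma pipD (f g : RF K) : pip (f + g) = pip f + pip g.
Proof.
have df := denF_neq0 f; have dg := denF_neq0 g.
rewrite (sumF f g) (pipE _ _ (mulf_neq0 df dg)) /pip.
move: df dg; move: (numF f) (denF f) (numF g) (denF g) => a b c d df dg.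
rewrite divpD (divp_pmul2r a dg df) (mulrC c b) (divp_pmul2l c df dg).
by [].
Qed.
Lemma toF1 : F 1 = 1. Proof. exact: tofrac1. Qed.
Lemma toF0 : F 0 = 0. Proof. exact: tofrac0. Qed.
Lemma pipF p : pip (F p) = p.
Proof.
have -> : F p = F p / F 1 by rewrite toF1 divr1.
by rewrite (pipE p 1 (oner_neq0 _)) divp1.
Qed.
Lemma pip0 : pip (0 : RF K) = 0.
Proof. by have := pipF 0; rewrite toF0. Qed.
Lemma pipN (f : RF K) : pip (- f) = - pip f.
Proof. by apply/eqP; rewrite -subr_eq0 opprK -pipD addNr pip0. Qed.
Lemma pipB (f g : RF K) : pip (f - g) = pip f - pip g.
Proof. by rewrite pipD pipN. Qed.
Lemma proper_numden (f : RF K) : is_proper f = (size (numF f) <= size (denF f))%N.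
Proof. by []. Qed.
Lemma properD (f g : RF K) : is_proper f -> is_proper g -> is_proper (f + g).
Proof.
have df := denF_neq0 f; have dg := denF_neq0 g.
rewrite (sumF f g) (properE _ _ (mulf_neq0 df dg)) /is_proper.
move: df dg; move: (numF f) (denF f) (numF g) (denF g) => a b c d df dg h1 h2.
apply: leq_trans (size_polyD _ _) _; rewrite geq_max.
rewrite (size_mul_le a b d d df dg h1 (leqnn _)) /= [b * d]mulrC.
exact: (size_mul_le c d b b dg df h2 (leqnn _)).
Qed.
Lemma properM (f g : RF K) : is_proper f -> is_proper g -> is_proper (f * g).
Proof.
have df := denF_neq0 f; have dg := denF_neq0 g.
rewrite (prodF f g) (properE _ _ (mulf_neq0 df dg)) /is_proper.
move: df dg; move: (numF f) (denF f) (numF g) (denF g) => a b c d df dg h1 h2.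
exact: (size_mul_le a b c d df dg h1 h2).
Qed.
Lemma proper0 : is_proper (0 : RF K).
Proof.
have -> : (0 : RF K) = F 0 / F 1 by rewrite toF0 mul0r.
by rewrite (properE 0 1 (oner_neq0 _)) size_poly0.
Qed.
Lemma pip_eq0 (f : RF K) : (pip f == 0) = (size (numF f) < size (denF f))%N.
Proof.
rewrite /pip divp_eq0 (negbTE (denF_neq0 f)) /=.
by case: eqP => [->|//]; rewrite size_poly0 size_poly_gt0 denF_neq0.
Qed.
Lemma pip_properM (f g : RF K) : is_proper f -> pip g = 0 -> pip (f * g) = 0.
Proof.
move=> hf /eqP hg; apply/eqP; move: hf hg; rewrite pip_eq0 /is_proper.
have df := denF_neq0 f; have dg := denF_neq0 g.
rewrite (prodF f g) (pipE _ _ (mulf_neq0 df dg)) divp_eq0.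
move: df dg; move: (numF f) (denF f) (numF g) (denF g) => a b c d df dg h1 h2.
by rewrite (size_mul_lt a b c d df dg h1 h2) !orbT.
Qed.
Lemma const0D (f g : RF K) : const0 (f + g) = const0 f + const0 g.
Proof. by rewrite /const0 pipD hornerD. Qed.
Lemma const0B (f g : RF K) : const0 (f - g) = const0 f - const0 g.
Proof. by rewrite /const0 pipB hornerD hornerN. Qed.
Lemma const0_divX (f : RF K) k : const0 (f / F 'X^k) = (pip f)`_k.
Proof.
have df := denF_neq0 f.
have dX : ('X^k : {poly K}) != 0 by rewrite monic_neq0 ?monicXn.
have ef := frac_numden f.
have -> : f / F 'X^k = F (numF f) / F (denF f * 'X^k).
  by rewrite {1}ef toFM invfM mulrA.
rewrite /const0 (pipE _ _ (mulf_neq0 df dX)) /pip.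
move: (numF f) (denF f) => a b.
by rewrite -divp_divl -Pdiv.IdomainMonic.drop_poly_divp horner_coef0 coef_drop_poly add0n.
Qed.
Lemma proper_invX k : is_proper ((F 'X^k)^-1).
Proof.
have dX : ('X^k : {poly K}) != 0 by rewrite monic_neq0 ?monicXn.
have -> : (F 'X^k)^-1 = F 1 / F 'X^k by rewrite toF1 mul1r.
by rewrite (properE 1 _ dX) size_poly1 size_polyXn.
Qed.
Lemma polyF_unit m (M : 'M[{poly K}]_m) : \det M != 0 -> polyF M \in unitmx.
Proof.
move=> dM; rewrite unitmxE unitfE /polyF.
have -> : \det (map_mx (@toF K) M) = F (\det M) by rewrite /toF det_map_mx.
exact: F_neq0.
Qed.
Arguments polyF_unit {m M}.
Lemma polyF_mul m r p (A : 'M[{poly K}]_(m, r)) (B : 'M_(r, p)) :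
  polyF (A *m B) = polyF A *m polyF B.
Proof. by rewrite /polyF /toF map_mxM. Qed.
Lemma polyF_tr m r (A : 'M[{poly K}]_(m, r)) : polyF A^T = (polyF A)^T.
Proof. by rewrite /polyF map_trmx. Qed.
Lemma polyF0 m r : polyF (0 : 'M[{poly K}]_(m, r)) = 0.
Proof. by apply/matrixP=> i j; rewrite !mxE toF0. Qed.
Lemma map_pipB m r (A B : 'M[RF K]_(m, r)) :
  map_mx (@pip K) (A - B) = map_mx (@pip K) A - map_mx (@pip K) B.
Proof. by apply/matrixP=> i j; rewrite !mxE pipB. Qed.
Lemma rho_eB m (M : 'M[{poly K}]_m) x y : rho_e M (x - y) = rho_e M x - rho_e M y.
Proof. by rewrite /rho_e mulmxBr map_pipB mulmxBr. Qed.
Lemma polyF_inj m r (A B : 'M[{poly K}]_(m, r)) : polyF A = polyF B -> A = B.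
Proof.
move=> e; apply/matrixP=> i j; apply: F_inj.
by have := congr1 (fun C : 'M[RF K]_(m, r) => C i j) e; rewrite /= !mxE.
Qed.
Lemma mul_inj m r (M : 'M[{poly K}]_m) (A B : 'M_(m, r)) :
  \det M != 0 -> M *m A = M *m B -> A = B.
Proof.
move=> dM e; apply: polyF_inj.
have := congr1 (fun C : 'M[{poly K}]_(m, r) => invmx (polyF M) *m polyF C) e.
by rewrite /= !polyF_mul !(mulKmx (polyF_unit dM)).
Qed.
Lemma pip_mx_zero m r (A : 'M[RF K]_(m, r)) (s : 'cV_r) :
  proper_mx A -> map_mx (@pip K) s = 0 -> map_mx (@pip K) (A *m s) = 0.
Proof.
move=> hA hs; apply/matrixP=> i j; rewrite !mxE.
rewrite (big_morph (@pip K) pipD pip0).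
apply: big1 => k _; apply: pip_properM; first exact: hA.
by have := congr1 (fun C : 'cV[{poly K}]_r => C k j) hs; rewrite /= !mxE.
Qed.
Lemma proper_mul m r (A : 'M[RF K]_(m, r)) (x : 'cV_r) :
  proper_mx A -> proper_vec x -> proper_vec (A *m x).
Proof.
move=> hA hx i; rewrite !mxE.
apply: (big_ind (@is_proper K)); [exact: proper0 | exact: properD |].
by move=> k _; apply: properM.
Qed.
Lemma proper_tr m r (A : 'M[RF K]_(m, r)) : proper_mx A -> proper_mx A^T.
Proof. by move=> hA i j; rewrite mxE. Qed.
Lemma proper_vec_mx m (x : 'cV[RF K]_m) : proper_vec x -> proper_mx x.
Proof. by move=> hx i j; rewrite (ord1 j). Qed.
Arguments proper_tr {m r A}.
Arguments proper_vec_mx {m x}.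
Arguments pip_mx_zero {m r A s}.
Arguments proper_mul {m r A x}.
Lemma const0_pip0 (f : RF K) : pip f = 0 -> const0 f = 0.
Proof. by rewrite /const0 => ->; rewrite horner0. Qed.
Lemma half_wd m (N : 'M[RF K]_m) (y x x' : 'cV_m) :
  proper_vec y -> map_mx (@pip K) (N *m (x' - x)) = 0 ->
  const0 ((y^T *m N *m x') 0 0) = const0 ((y^T *m N *m x) 0 0).
Proof.
move=> hy hs; apply/eqP; rewrite -subr_eq0 -const0B.
have -> : (y^T *m N *m x') 0 0 - (y^T *m N *m x) 0 0 =
          (y^T *m (N *m (x' - x))) 0 0.
  by rewrite mulmxBr mulmxBr !mulmxA !mxE.
apply/eqP; apply: const0_pip0.
have := pip_mx_zero (proper_tr (proper_vec_mx hy)) hs.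
by move/(congr1 (fun C : 'M[{poly K}]_(1, 1) => C 0 0)); rewrite /= !mxE.
Qed.
Lemma transp m (N : 'M[RF K]_m) (y x : 'cV_m) :
  (y^T *m N *m x) 0 0 = (x^T *m N^T *m y) 0 0.
Proof.
transitivity (((y^T *m N *m x)^T) 0 0); first by rewrite [RHS]mxE.
by rewrite !trmx_mul trmxK mulmxA.
Qed.
Arguments mul_inj {m r M A B}.
Lemma rho_diff m (M : 'M[{poly K}]_m) (x x' : 'cV_m) : \det M != 0 ->
  rho M x' = rho M x -> map_mx (@pip K) (invmx (polyF M) *m (x' - x)) = 0.
Proof.
move=> dM e; rewrite mulmxBr map_pipB; apply/eqP; rewrite subr_eq0; apply/eqP.
exact: (mul_inj dM).
Qed.
Arguments rho_diff {m M x x'}.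
Arguments half_wd {m N y x x'}.
Lemma invF_tr m (M : 'M[{poly K}]_m) : invmx (polyF M^T) = (invmx (polyF M))^T.
Proof. by rewrite polyF_tr trmx_inv. Qed.
Lemma wd m (M : 'M[{poly K}]_m) (y y' x x' : 'cV_m) : \det M != 0 ->
  proper_vec y -> proper_vec y' -> proper_vec x -> proper_vec x' ->
  rho M^T y' = rho M^T y -> rho M x' = rho M x ->
  const0 ((y'^T *m invmx (polyF M) *m x') 0 0) =
  const0 ((y^T *m invmx (polyF M) *m x) 0 0).
Proof.
move=> dM hy hy' hx hx' ey ex.
have dMT : \det M^T != 0 by rewrite det_tr.
have hsx := rho_diff dM ex.
have hsy := rho_diff dMT ey; rewrite invF_tr in hsy.
rewrite (half_wd hy' hsx) transp (half_wd hx hsy) -transp.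
by [].
Qed.
Lemma pairingE m (M : 'M[{poly K}]_m) (y x : 'cV_m) : \det M != 0 ->
  proper_vec y -> proper_vec x ->
  pairing M (rho M^T y) (rho M x) = const0 ((y^T *m invmx (polyF M) *m x) 0 0).
Proof.
move=> dM hy hx; rewrite /pairing.
set P := (fun yx : 'cV[RF K]_m * 'cV[RF K]_m => _).
have ex : exists yx, P yx by exists (y, x); rewrite /P /=; split.
have := ClassicalEpsilon.epsilon_spec (inhabits (0 : 'cV[RF K]_m, 0 : 'cV[RF K]_m)) P ex.
case: (ClassicalEpsilon.epsilon _ P) => y' x' [/= hy' hx' ey ex'].
exact: wd.
Qed.
Lemma rho_decomp m (M : 'M[{poly K}]_m) (x : 'cV_m) : \det M != 0 ->
  let s := invmx (polyF M) *m x - polyF (map_mx (@pip K) (invmx (polyF M) *m x)) in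
  polyF (rho M x) = x - polyF M *m s /\ map_mx (@pip K) s = 0.
Proof.
move=> dM s; split.
  rewrite /rho /rho_e polyF_mul /s mulmxBr (mulKVmx (polyF_unit dM)).
  by rewrite opprB addrC subrK.
by apply/matrixP=> i j; rewrite /s !mxE pipB pipF subrr.
Qed.
Lemma rho_e_kill m (M : 'M[{poly K}]_m) (z : 'cV_m) : \det M != 0 ->
  map_mx (@pip K) z = 0 -> rho_e M (polyF M *m z) = 0.
Proof.
move=> dM hz; rewrite /rho_e (mulKmx (polyF_unit dM)) hz.
by rewrite mulmx0.
Qed.
Lemma nondeg m (M : 'M[{poly K}]_m) (y y' : 'cV_m) : \det M != 0 ->
  (forall x, proper_vec x -> const0 ((y^T *m invmx (polyF M) *m x) 0 0) =
                             const0 ((y'^T *m invmx (polyF M) *m x) 0 0)) ->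
  rho M^T y = rho M^T y'.
Proof.
move=> dM H; apply/eqP; rewrite -subr_eq0 /rho -rho_eB; apply/eqP.
set v := invmx (polyF M^T) *m (y - y').
suff hv : map_mx (@pip K) v = 0 by rewrite /rho_e -/v hv mulmx0.
apply/matrixP => i j; rewrite (ord1 j) !mxE; apply/polyP => k; rewrite coef0.
set c := (F 'X^k)^-1.
set x : 'cV[RF K]_m := c *: delta_mx i 0.
have px : proper_vec x.
  move=> i'; rewrite !mxE; case: (i' == i) => /=.
    by rewrite mulr1; exact: proper_invX.
  by rewrite mulr0; exact: proper0.
have := H x px; move/eqP; rewrite -subr_eq0 -const0B.
have -> : (y^T *m invmx (polyF M) *m x) 0 0 - (y'^T *m invmx (polyF M) *m x) 0 0
          = v i 0 / F 'X^k.
  transitivity (((y - y')^T *m invmx (polyF M) *m x) 0 0).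
    by rewrite linearB /= !mulmxBl !mxE.
  rewrite transp -invF_tr -mulmxA -/v /x linearZ /= trmx_delta -scalemxAl -rowE.
  by rewrite !mxE mulrC.
by rewrite const0_divX /v mxE => /eqP.
Qed.
Arguments nondeg {m M y y'}.
Arguments pairingE {m M y x}.
Arguments rho_decomp {m M x}.
Arguments rho_e_kill {m M z}.
Lemma main (n n1 : nat)
  (L : 'M[{poly K}]_n) (L1 : 'M[{poly K}]_n1)
  (Theta Theta1 : 'M[RF K]_(n1, n)) :
  \det L != 0 -> \det L1 != 0 ->
  proper_mx Theta -> proper_mx Theta1 ->
  Theta *m polyF L = polyF L1 *m Theta1 ->
  (exists psi, is_dual L L1 (phi_map L1 Theta) psi) /\
  (forall psi, is_dual L L1 (phi_map L1 Theta) psi ->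
     forall w : 'cV[RF K]_n1, proper_vec w ->
       psi (rho L1^T w) = rho L^T (Theta1^T *m w)).
Proof.
move=> dL dL1 hT hT1 eT.
have rel : invmx (polyF L1) *m Theta = Theta1 *m invmx (polyF L).
  rewrite -[LHS]mulmx1 -(mulmxV (polyF_unit dL)) mulmxA.
  rewrite -(mulmxA _ Theta) eT (mulKmx (polyF_unit dL1)).
  by [].
have phi_rho : forall x, proper_vec x ->
    phi_map L1 Theta (rho L x) = rho L1 (Theta *m x).
  move=> x hx; have [e hs] := @rho_decomp n L x dL.
  rewrite /phi_map e mulmxBr mulmxA eT -mulmxA rho_eB.
  by rewrite (rho_e_kill dL1 (pip_mx_zero hT1 hs)) subr0.
have Kid : forall w x, proper_vec w -> proper_vec x ->
    pairing L (rho L^T (Theta1^T *m w)) (rho L x) =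
    pairing L1 (rho L1^T w) (phi_map L1 Theta (rho L x)).
  move=> w x hw hx.
  rewrite phi_rho // (pairingE dL (proper_mul (proper_tr hT1) hw) hx).
  rewrite (pairingE dL1 hw (proper_mul hT hx)).
  by rewrite trmx_mul trmxK -!mulmxA (mulmxA (invmx (polyF L1)) Theta x) rel !mulmxA.
split.
  pose P (eta : 'cV[{poly K}]_n1) := fun w : 'cV[RF K]_n1 => proper_vec w /\ rho L1^T w = eta.
  pose wof eta := ClassicalEpsilon.epsilon (inhabits (0 : 'cV[RF K]_n1)) (P eta).
  exists (fun eta => rho L^T (Theta1^T *m wof eta)).
  move=> eta [w [hw ew]].
  have [hw0 ew0] : P eta (wof eta).
    exact: (ClassicalEpsilon.epsilon_spec _ (P eta) (ex_intro _ w (conj hw ew))).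
  move: (wof eta) hw0 ew0 => w0 hw0 ew0; clear hw ew; subst eta.
  split.
    by exists (Theta1^T *m w0); split; [exact: (proper_mul (proper_tr hT1) hw0) |].
  move=> xi [x [hx <-]]; exact: (Kid w0 x hw0 hx).
move=> psi hd w hw.
have hin : inU L1^T (rho L1^T w) by exists w.
have [[y [hy ey]] H] := hd _ hin.
rewrite -ey.
apply: (nondeg dL) => x hx.
rewrite -(pairingE dL hy hx) -(pairingE dL (proper_mul (proper_tr hT1) hw) hx).
have hxi : inU L (rho L x) by exists x.
by rewrite ey (H _ hxi) (Kid w x hw hx).
Qed.
End S.

Theorem theorem3p4 (K : fieldType) (n n1 : nat)
  (L : 'M[{poly K}]_n) (L1 : 'M[{poly K}]_n1)
  (Theta Theta1 : 'M[RF K]_(n1, n)) :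
  \det L != 0 -> \det L1 != 0 ->
  proper_mx Theta -> proper_mx Theta1 ->
  Theta *m polyF L = polyF L1 *m Theta1 ->
  (exists psi, is_dual L L1 (phi_map L1 Theta) psi) /\
  (forall psi, is_dual L L1 (phi_map L1 Theta) psi ->
     forall w : 'cV[RF K]_n1, proper_vec w ->
       psi (rho L1^T w) = rho L^T (Theta1^T *m w)).
Proof. exact (@main K n n1 L L1 Theta Theta1). Qed.
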